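(* Let $k$ be a positive integer. If $G$ is an $(A,U,B)$-structure graph (with respect to $k$), then $G$ is $k$-placeable.
   Context: All graphs are finite and simple. For a graph $H$ on $m$ vertices, a $k$-placement of $H$ (in $K_m$) is a $k$-tuple $(\phi_1,\dots,\phi_k)$ of bijections $\phi_i:V(H)\to V(K_m)$ such that the edge sets $\phi_i(E(H))=\{\phi_i(x)\phi_i(y):xy\in E(H)\}$ are pairwise disjoint; $H$ is $k$-placeable if it has one. A vertex $v$ is $k$-placed if $\phi_i(v)\neq\phi_j(v)$ for all $i\ne j$, and $k$-fixed if $\phi_i(v)=\phi_j(v)$ for all $i,j$. $N_G(X)$ denotes the set of vertices outside $X$ adjacent to some vertex of $X$, and $N_A(u)$ the set of neighbours of $u$ in $V(A)$. Definition: let $A,B$ be vertex-disjoint induced subgraphs of $G$ and let $U\subseteq V(G)$ be an independent set (possibly empty) such that either $V(A),V(B),U$ is a partition of $V(G)$, or $V(A),V(B)$ is a partition of $V(G)$ with $U\subseteq V(A)$ or $U\subseteq V(B)$. $G$ is an $(A,U,B)$-structure graph if (i) at most one vertex $a\in V(A)\setminus U$ has neighbours in $V(B)\setminus U$, and for each $u\in U$ we have $|N_A(u)|\le 1$ if $U\cap V(A)=\emptyset$ and $|N_B(u)|\le1$ if $U\cap V(B)=\emptyset$; and (ii) each of $A$ and $B$ has a $k$-placement (in $K_{|V(A)|}$, resp. $K_{|V(B)|}$) such that the vertices of $N_G(U)$ and the vertex $a$ are $k$-placed and each vertex of $U$ is $k$-fixed (when $U$ is disjoint from $V(A)\cup V(B)$,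 $U$ is placed on its own $|U|$ vertices with each vertex $k$-fixed). *)

(* Defs.v *)
From mathcomp Require Import all_boot.
Set Implicit Arguments. Unset Strict Implicit. Unset Printing Implicit Defensive.

Section Defs.
Variable T : finType.

Definition simple_graph (e : rel T) : Prop := symmetric e /\ irreflexive e.

Definition edge_image (e : rel T) (S : {set T}) (f : T -> T) : {set {set T}} :=
  [set [set f x; f y] | x in S, y in S & e x y].

(* A k-placement of the induced subgraph G[S] in the complete graph on the
   vertex set S itself (|S| vertices): k bijections S -> S whose images of the
   edge set are pairwise disjoint. *)
Definition is_placement (e : rel T) (S : {set T}) (k : nat)
    (phi : 'I_k -> T -> T) : Prop :=
  (forall i, {in S &, injective (phi i)} /\ {in S, forall x, phi i x \in S}) /\
  (forall i j : 'I_k, i != j -> [disjoint edge_image e S (phi i) & edge_image e S (phi j)]).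

Definition placeable (e : rel T) (k : nat) : Prop :=
  exists phi : 'I_k -> T -> T, is_placement e [set: T] phi.

Definition kplaced (k : nat) (phi : 'I_k -> T -> T) (v : T) : Prop :=
  forall i j : 'I_k, i != j -> phi i v != phi j v.

Definition kfixed (k : nat) (phi : 'I_k -> T -> T) (v : T) : Prop :=
  forall i j : 'I_k, phi i v = phi j v.

Definition nbhd (e : rel T) (S : {set T}) (u : T) : {set T} := [set v in S | e u v].

Definition NG (e : rel T) (X : {set T}) : {set T} :=
  [set v | (v \notin X) && [exists x in X, e x v]].

Definition independent (e : rel T) (U : {set T}) : Prop :=
  forall u v, u \in U -> v \in U -> ~~ e u v.

Definition has_nb_in (e : rel T) (S : {set T}) (x : T) : Prop :=
  exists2 z, z \in S & e x z.

(* G is an (A,U,B)-structure graph w.r.t. k, where A = G[SA], B = G[SB].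
   The (at most one) vertex a of condition (i) is any vertex of SA \ U with a
   neighbour in SB \ U. *)
Definition structure_graph (e : rel T) (k : nat) (SA U SB : {set T}) : Prop :=
  [/\ [disjoint SA & SB],
      independent e U,
      (SA :|: SB :|: U = [set: T] /\ [disjoint SA & U] /\ [disjoint SB & U]) \/
      (SA :|: SB = [set: T] /\ (U \subset SA \/ U \subset SB)),
      (forall x y, x \in SA :\: U -> y \in SA :\: U ->
         has_nb_in e (SB :\: U) x -> has_nb_in e (SB :\: U) y -> x = y) /\
      (forall u, u \in U ->
         ([disjoint U & SA] -> #|nbhd e SA u| <= 1) /\
         ([disjoint U & SB] -> #|nbhd e SB u| <= 1)) &
      (exists phiA : 'I_k -> T -> T,
         [/\ is_placement e SA phiA,
             (forall v, v \in SA -> v \in NG e U -> kplaced phiA v),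
             (forall a, a \in SA :\: U -> has_nb_in e (SB :\: U) a -> kplaced phiA a) &
             (forall u, u \in SA -> u \in U -> kfixed phiA u)]) /\
      (exists phiB : 'I_k -> T -> T,
         [/\ is_placement e SB phiB,
             (forall v, v \in SB -> v \in NG e U -> kplaced phiB v) &
             (forall u, u \in SB -> u \in U -> kfixed phiB u)])].

End Defs.

(* Main.v *)
Require Import Defs.
From mathcomp Require Import all_boot.

Theorem mainTheorem3 (T : finType) (e : rel T) (k : nat) (SA U SB : {set T}) :
  0 < k -> simple_graph e -> structure_graph e k SA U SB -> placeable e k.
Proof.
move=> k0 [esym eirr] [dAB indU part [condi condu]
  [[phiA [[plA dA] pA aA fA]] [phiB [[plB dB] pB fB]]]].
have dBA : [disjoint SB & SA] by rewrite disjoint_sym.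
have esy : forall a b, e a b -> e b a by move=> a b; rewrite esym.
pose f (i : 'I_k) z := if z \in SA then phiA i z else if z \in SB then phiB i z else z.
have fA' : forall i z, z \in SA -> f i z = phiA i z by move=> i z h; rewrite /f h.
have fB' : forall i z, z \in SB -> f i z = phiB i z.
  by move=> i z h; rewrite /f h (disjointFr dBA h).
have fO : forall i z, z \notin SA -> z \notin SB -> f i z = z.
  by move=> i z h1 h2; rewrite /f (negbTE h1) (negbTE h2).
have regA : forall i z, (f i z \in SA) = (z \in SA).
  move=> i z; case hA: (z \in SA); first by rewrite fA' // (plA i).2.
  case hB: (z \in SB); last by rewrite fO ?hA ?hB.
  rewrite fB' //; apply: (disjointFr _ ((plB i).2 _ hB)); by rewrite disjoint_sym.
have regB : forall i z, (f i z \in SB) = (z \in SB).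
  move=> i z; case hA: (z \in SA).
    by rewrite fA' // (disjointFr dAB ((plA i).2 _ hA)) (disjointFr dAB hA).
  case hB: (z \in SB); first by rewrite fB' // (plB i).2.
  by rewrite fO ?hA ?hB.
have finj : forall i, injective (f i).
  move=> i x y h.
  have hA : (x \in SA) = (y \in SA) by rewrite -(regA i x) h regA.
  have hB : (x \in SB) = (y \in SB) by rewrite -(regB i x) h regB.
  case xA: (x \in SA).
    have yA : y \in SA by rewrite -hA.
    by move: h; rewrite !fA' //; apply: (plA i).1.
  case xB: (x \in SB).
    have yB : y \in SB by rewrite -hB.
    by move: h; rewrite !fB' //; apply: (plB i).1.
  by move: h; rewrite !fO // -?hA -?hB ?xA ?xB.
have inU : forall z, z \notin SA -> z \notin SB ->
    [/\ z \in U, [disjoint SA & U] & [disjoint SB & U]].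
  move=> z h1 h2; case: part => [[hT [d1 d2]] | [hT _]].
    have : z \in SA :|: SB :|: U by rewrite hT inE.
    by rewrite !inE (negbTE h1) (negbTE h2) /= => ->.
  have : z \in SA :|: SB by rewrite hT inE.
  by rewrite !inE (negbTE h1) (negbTE h2).
have disjUB : forall u, u \in U -> u \in SA -> [disjoint U & SB].
  move=> u hu ha; case: part => [[_ [d1 _]] | [_ [s|s]]].
  - by move: (disjointFr d1 ha); rewrite hu.
  - exact: disjointWl s dAB.
  - by move: (disjointFr dAB ha); rewrite (subsetP s _ hu).
have disjUA : forall u, u \in U -> u \in SB -> [disjoint U & SA].
  move=> u hu hb; case: part => [[_ [_ d2]] | [_ [s|s]]].
  - by move: (disjointFr d2 hb); rewrite hu.
  - by move: (disjointFr dAB (subsetP s _ hu)); rewrite hb.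
  - exact: disjointWl s dBA.
have notU : forall u v, u \in U -> e u v -> v \notin U.
  by move=> u v hu huv; apply/negP => hv; move: (indU u v hu hv); rewrite huv.
have inNG : forall u v, u \in U -> e u v -> v \in NG e U.
  move=> u v hu huv; rewrite inE (notU u v hu huv) /=.
  by apply/existsP; exists u; rewrite hu.
have nb1 : forall S u a b, #|nbhd e S u| <= 1 -> a \in S -> b \in S -> e u a -> e u b -> a = b.
  move=> S u a b /card_le1_eqP h ha hb hua hub.
  by apply: h; rewrite inE ?ha ?hb ?hua ?hub.
have kAA : forall i j x y x' y', i != j -> e x y -> e x' y' -> x \in SA -> y \in SA ->
    x' \in SA -> y' \in SA -> phiA i x = phiA j x' -> phiA i y = phiA j y' -> False.
  move=> i j x y x' y' ij exy exy' xA yA xA' yA' h1 h2.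
  have m1 : [set phiA i x; phiA i y] \in edge_image e SA (phiA i).
    by apply/imset2P; apply: (Imset2spec (x1:=x) (x2:=y)) => //; rewrite inE yA.
  have m2 : [set phiA i x; phiA i y] \in edge_image e SA (phiA j).
    by rewrite h1 h2; apply/imset2P; apply: (Imset2spec (x1:=x') (x2:=y')) => //; rewrite inE yA'.
  by rewrite (disjointFr (dA i j ij) m1) in m2.
have kBB : forall i j x y x' y', i != j -> e x y -> e x' y' -> x \in SB -> y \in SB ->
    x' \in SB -> y' \in SB -> phiB i x = phiB j x' -> phiB i y = phiB j y' -> False.
  move=> i j x y x' y' ij exy exy' xA yA xA' yA' h1 h2.
  have m1 : [set phiB i x; phiB i y] \in edge_image e SB (phiB i).
    by apply/imset2P; apply: (Imset2spec (x1:=x) (x2:=y)) => //; rewrite inE yA.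
  have m2 : [set phiB i x; phiB i y] \in edge_image e SB (phiB j).
    by rewrite h1 h2; apply/imset2P; apply: (Imset2spec (x1:=x') (x2:=y')) => //; rewrite inE yA'.
  by rewrite (disjointFr (dB i j ij) m1) in m2.
have crossU : forall i j x y x' y', i != j -> e x y -> e x' y' -> x \in U -> x \in SA ->
    x' \in SA -> y \in SB -> y' \in SB ->
    phiA i x = phiA j x' -> phiB i y = phiB j y' -> False.
  move=> i j x y x' y' ij exy exy' xU xA xA' yB yB' h1 h2.
  have xx : x = x'.
    apply: (plA j).1 => //; by rewrite -h1 (fA x xA xU j i).
  subst x'.
  have yy : y = y' by apply: (nb1 SB x) => //; apply: (condu x xU).2; exact: disjUB xU xA.
  subst y'.
  by move: (pB y yB (inNG x y xU exy) i j ij); rewrite h2 eqxx.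
have kAB : forall i j x y x' y', i != j -> e x y -> e x' y' -> x \in SA -> y \in SB ->
    x' \in SA -> y' \in SB -> phiA i x = phiA j x' -> phiB i y = phiB j y' -> False.
  move=> i j x y x' y' ij exy exy' xA yB xA' yB' h1 h2.
  case xU: (x \in U); first exact: (crossU i j x y x' y').
  case xU': (x' \in U).
    by apply: (crossU j i x' y' x y) => //; rewrite eq_sym.
  case yU: (y \in U).
    have dUA := disjUA y yU yB.
    have yy : y = y' by apply: (plB j).1 => //; rewrite -h2 (fB y yB yU j i).
    subst y'.
    have xx : x = x' by apply: (nb1 SA y) => //; try exact: esy; apply: (condu y yU).1.
    subst x'.
    by move: (pA x xA (inNG y x yU (esy _ _ exy)) i j ij); rewrite h1 eqxx.
  case yU': (y' \in U).
    have dUA := disjUA y' yU' yB'.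
    have yy : y = y' by apply: (plB i).1 => //; rewrite h2 (fB y' yB' yU' j i).
    by rewrite yy yU' in yU.
  have xx : x = x'.
    apply: condi; rewrite ?inE ?xU ?xU' ?xA ?xA' //.
      by exists y; rewrite // inE yU yB.
    by exists y'; rewrite // inE yU' yB'.
  subst x'.
  have ha : x \in SA :\: U by rewrite inE xU xA.
  have hn : has_nb_in e (SB :\: U) x by exists y; rewrite // inE yU yB.
  by move: (aA x ha hn i j ij); rewrite h1 eqxx.
have kAO : forall i j x y x' y', i != j -> e x y -> e x' y' -> x \in SA ->
    x' \in SA -> y \notin SA -> y \notin SB -> y' \notin SA -> y' \notin SB ->
    phiA i x = phiA j x' -> y = y' -> False.
  move=> i j x y x' y' ij exy exy' xA xA' yA yB yA' yB' h1 yy; subst y'.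
  case: (inU y yA yB) => yU dAU _.
  have xx : x = x'.
    apply: (nb1 SA y) => //; try exact: esy; apply: (condu y yU).1.
    by rewrite disjoint_sym.
  subst x'.
  by move: (pA x xA (inNG y x yU (esy _ _ exy)) i j ij); rewrite h1 eqxx.
have kBO : forall i j x y x' y', i != j -> e x y -> e x' y' -> x \in SB ->
    x' \in SB -> y \notin SA -> y \notin SB -> y' \notin SA -> y' \notin SB ->
    phiB i x = phiB j x' -> y = y' -> False.
  move=> i j x y x' y' ij exy exy' xA xA' yA yB yA' yB' h1 yy; subst y'.
  case: (inU y yA yB) => yU _ dBU.
  have xx : x = x'.
    apply: (nb1 SB y) => //; try exact: esy; apply: (condu y yU).2.
    by rewrite disjoint_sym.
  subst x'.
  by move: (pB x xA (inNG y x yU (esy _ _ exy)) i j ij); rewrite h1 eqxx.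
have key : forall i j x y x' y', i != j -> e x y -> e x' y' ->
    f i x = f j x' -> f i y = f j y' -> False.
  move=> i j x y x' y' ij exy exy' h1 h2.
  have hA : (x \in SA) = (x' \in SA) by rewrite -(regA i x) h1 regA.
  have hB : (x \in SB) = (x' \in SB) by rewrite -(regB i x) h1 regB.
  have gA : (y \in SA) = (y' \in SA) by rewrite -(regA i y) h2 regA.
  have gB : (y \in SB) = (y' \in SB) by rewrite -(regB i y) h2 regB.
  case xA: (x \in SA); rewrite xA in hA.
    case yA: (y \in SA); rewrite yA in gA.
      by apply: (kAA i j x y x' y'); rewrite -?fA' // -?fA'.
    case yB: (y \in SB); rewrite yB in gB.
      by apply: (kAB i j x y x' y'); rewrite -?fA' -?fB' //.
    apply: (kAO i j x y x' y') => //; rewrite ?yA ?yB -?gA -?gB ?yA ?yB //.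
      by rewrite -!fA'.
    by rewrite -(fO i y) ?yA ?yB // h2 fO // -?gA -?gB ?yA ?yB.
  case xB: (x \in SB); rewrite xB in hB.
    case yA: (y \in SA); rewrite yA in gA.
      by apply: (kAB i j y x y' x' ij (esy _ _ exy) (esy _ _ exy')); rewrite -?fA' -?fB' //.
    case yB: (y \in SB); rewrite yB in gB.
      by apply: (kBB i j x y x' y'); rewrite -?fB' // -?fB'.
    apply: (kBO i j x y x' y') => //; rewrite ?yA ?yB -?gA -?gB ?yA ?yB //.
      by rewrite -!fB'.
    by rewrite -(fO i y) ?yA ?yB // h2 fO // -?gA -?gB ?yA ?yB.
  case yA: (y \in SA); rewrite yA in gA.
    apply: (kAO i j y x y' x' ij (esy _ _ exy) (esy _ _ exy')) => //; rewrite ?xA ?xB -?hA -?hB ?xA ?xB //.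
      by rewrite -!fA'.
    by rewrite -(fO i x) ?xA ?xB // h1 fO // -?hA -?hB ?xA ?xB.
  case yB: (y \in SB); rewrite yB in gB.
    apply: (kBO i j y x y' x' ij (esy _ _ exy) (esy _ _ exy')) => //; rewrite ?xA ?xB -?hA -?hB ?xA ?xB //.
      by rewrite -!fB'.
    by rewrite -(fO i x) ?xA ?xB // h1 fO // -?hA -?hB ?xA ?xB.
  case: (inU x) => [|| xU _ _]; rewrite ?xA ?xB //.
  case: (inU y) => [|| yU _ _]; rewrite ?yA ?yB //.
  by move: (indU x y xU yU); rewrite exy.
exists f; split.
  by move=> i; split; [move=> x y _ _; apply: finj | move=> x _; rewrite inE].
move=> i j ij; rewrite -setI_eq0; apply/eqP/setP => P; rewrite !inE.
apply/negP => /andP [/imset2P [x y _ hy ->] /imset2P [x' y' _ hy' H]].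
move: hy hy'; rewrite !inE /= => exy exy'.
have m1 : f i x \in [set f j x'; f j y'] by rewrite -H set21.
have m2 : f i y \in [set f j x'; f j y'] by rewrite -H set22.
case/set2P: m1 => h1; case/set2P: m2 => h2.
- have xy : x = y by apply: (finj i); rewrite h1 h2.
  by rewrite xy eirr in exy.
- exact: (key i j x y x' y').
- apply: (key i j y x x' y') => //; exact: (esy _ _ exy).
- have xy : x = y by apply: (finj i); rewrite h1 h2.
  by rewrite xy eirr in exy.
Qed.
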